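(* For every infinite word $w\in A_q^{\omega}$, the image $\mathcal{D}_{p/q}(w)$ exists and is unique.
   Context: Let $p>q>1$ be coprime integers, $A_q=\{0,1,\dots,q-1\}$ and $B=\{p-(2q-1),\dots,p-1\}$. For $n\in\mathbb{N}$ and $a\in\mathbb{Z}$, let $\tau(n,a)=\frac{np+a}{q}$, defined only when $q$ divides $np+a$. For $a\in B$ let $\omega(a)=\{(b,c)\in A_q\times A_q : c-b=a-(p-q)\}$. The transducer $\mathcal{D}_{p/q}$ has state set $\mathbb{N}$, input and output alphabet $A_q$, initial state $0$, and has a transition $n\xrightarrow{b|c}\tau(n,a)$ for every $n\in\mathbb{N}$, every $a\in B$ with $\tau(n,a)$ defined, and every $(b,c)\in\omega(a)$; no other transitions. For a finite word $u$, its image $\mathcal{D}_{p/q}(u)$ is the word $v$ (if it exists) such that there is a path from state $0$ reading input $u$ and producing output $v$. The image of an infinite word $w$ is an infinite word $w'$ such that for every finite prefix $u$ of $w$, $\mathcal{D}_{p/q}(u)$ exists and is a prefix of $w'$. *)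

(* Defs.v *)
From mathcomp Require Import all_boot all_order all_algebra.
Set Implicit Arguments. Unset Strict Implicit. Unset Printing Implicit Defensive.
Import Order.TTheory GRing.Theory Num.Theory.

(* Transducer D_{p/q}: states are naturals, letters of A_q are naturals < q. *)

(* transition n --b|c--> m : there is a in B = {p-(2q-1),...,p-1} (integers)
   with tau(n,a) = (n p + a)/q defined (q divides n p + a) and equal to the
   state m (a natural number), and (b,c) in omega(a), i.e. b,c in A_q and
   c - b = a - (p - q). *)
Definition trans (p q : nat) (n b c m : nat) : Prop :=
  exists a : int,
    [/\ (p%:Z - (2 * q - 1)%:Z <= a)%R, (a <= p%:Z - 1)%R,
        (m%:Z * q%:Z = n%:Z * p%:Z + a)%R,
        (b < q) /\ (c < q) &
        (c%:Z - b%:Z = a - (p%:Z - q%:Z))%R].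

Fixpoint run (p q : nat) (n : nat) (u v : seq nat) : Prop :=
  match u, v with
  | [::], [::] => True
  | b :: u', c :: v' => exists m, trans p q n b c m /\ run p q m u' v'
  | _, _ => False
  end.

Definition fin_image (p q : nat) (u v : seq nat) : Prop := run p q 0 u v.

Definition pref (w : nat -> nat) (n : nat) : seq nat := mkseq w n.

Definition is_prefix (v : seq nat) (w' : nat -> nat) : Prop :=
  forall i, i < size v -> nth 0 v i = w' i.

Definition inf_image (p q : nat) (w w' : nat -> nat) : Prop :=
  forall n, (exists v, fin_image p q (pref w n) v) /\
            (forall v, fin_image p q (pref w n) v -> is_prefix v w').

(* Main.v *)
Require Import Defs.
From mathcomp Require Import all_boot all_order all_algebra zify.
From Stdlib Require FunctionalExtensionality.
Import Order.TTheory GRing.Theory Num.Theory.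
Local Open Scope nat_scope.
Open Scope ring_scope.
Open Scope nat_scope.

Definition stepc (p q n b : nat) : nat * nat :=
  let Z := n * p + p - b in
  if Z %% q == 0 then (0, Z %/ q - 1) else (q - Z %% q, Z %/ q).

Lemma step_trans p q n b : 1 < q -> q < p -> b < q ->
  trans p q n b (stepc p q n b).1 (stepc p q n b).2.
Proof.
move=> hq hpq hb.
have hZ := divn_eq (n * p + p - b) q.
have hr := ltn_pmod (n * p + p - b) (ltnW hq).
rewrite /stepc.
set Z := n * p + p - b in hZ hr *.
set d := Z %/ q in hZ *. set r := Z %% q in hZ hr *.
case: eqP => Hr /=.
- have hd : 0 < d.
    rewrite lt0n; apply/eqP => E; rewrite E Hr /Z in hZ; lia.
  exists (- b%:Z + p%:Z - q%:Z)%R.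
  split; try lia.
  rewrite /Z in hZ; nia.
- exists ((q - r)%N%:Z - b%:Z + p%:Z - q%:Z)%R.
  split; try lia.
Qed.

Lemma trans_uniq p q n b c m c' m' : 0 < q ->
  trans p q n b c m -> trans p q n b c' m' -> c = c' /\ m = m'.
Proof.
move=> hq [a [h1 h2 h3 [h4 h5] h6]] [a' [h1' h2' h3' [h4' h5'] h6']].
have E : (m%:Z * q%:Z - m'%:Z * q%:Z = c%:Z - c'%:Z)%R by lia.
have : m = m' by nia.
move=> ?; subst; split=> //; lia.
Qed.

Section S.
Variables (p q : nat).
Fixpoint outs (n : nat) (u : seq nat) : seq nat :=
  match u with
  | [::] => [::]
  | b :: u' => (stepc p q n b).1 :: outs (stepc p q n b).2 u'
  end.

Lemma run_outs n u : 1 < q -> q < p -> all (fun x => x < q) u -> run p q n u (outs n u).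
Proof.
move=> hq hpq; elim: u n => [|b u IH] n //= /andP[hb hu].
exists (stepc p q n b).2; split; [exact: step_trans | exact: IH].
Qed.

Lemma outs_run n u v : 1 < q -> q < p -> run p q n u v -> v = outs n u.
Proof.
move=> hq hpq; elim: u n v => [|b u IH] n [|c v] //= [m [ht hr]].
have [hb _] : b < q /\ c < q by case: ht => a [].
have [-> Em] := @trans_uniq p q n b _ _ _ _ (ltnW hq) ht (@step_trans p q n b hq hpq hb).
by rewrite Em in hr; rewrite (IH _ _ hr).
Qed.

Lemma size_outs n u : size (outs n u) = size u.
Proof. by elim: u n => [|b u IH] n //=; rewrite IH. Qed.

Lemma outs_take n u k : outs n (take k u) = take k (outs n u).
Proof. by elim: u n k => [|b u IH] n [|k] //=; rewrite IH. Qed.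
End S.

Lemma take_mkseq (w : nat -> nat) k n : k <= n -> take k (mkseq w n) = mkseq w k.
Proof.
move=> hk; apply: (@eq_from_nth _ 0).
  by rewrite size_takel ?size_mkseq.
move=> i; rewrite size_takel ?size_mkseq // => hi.
by rewrite nth_take // !nth_mkseq // (leq_trans hi hk).
Qed.

Theorem mainTheorem2 (p q : nat) (hq : 1 < q) (hpq : q < p) (hcop : coprime p q)
  (w : nat -> nat) (hw : forall i, w i < q) :
  exists! w' : nat -> nat, inf_image p q w w'.
Proof.
have hall n : all (fun x => x < q) (pref w n).
  by apply/allP => x /mapP[i _ ->].
exists (fun i => nth 0 (outs p q 0 (pref w i.+1)) i); split.
- move=> n; split; first by exists (outs p q 0 (pref w n)); exact: (@run_outs p q 0 _ hq hpq (hall n)).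
  move=> v /(@outs_run p q 0 _ _ hq hpq) -> i; rewrite size_outs size_mkseq => hi.
  rewrite /pref -(@take_mkseq w i.+1 n hi) outs_take nth_take //.
- move=> w'' H; apply: FunctionalExtensionality.functional_extensionality => i.
  have [_ H2] := H i.+1.
  have := H2 _ (@run_outs p q 0 _ hq hpq (hall i.+1)).
  by move=> /(_ i); rewrite size_outs size_mkseq ltnSn => /(_ isT).
Qed.
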